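(* Let $\hat s:\Delta_{\mathcal Y}\times\mathcal Y\to\mathbb R\cup\{\pm\infty\}$ be a permutation-invariant regular classical scoring rule, $\mathcal Y=\{1,\dots,n\}$, and let $S=S[\hat s]$ be the corresponding spectral quantum score on $\mathbb C^n$. Then $S$ is truthful if and only if $\hat s$ is proper, and $S$ is strictly truthful if and only if $\hat s$ is strictly proper.
   Context: $\lambda(\rho)$ denotes the eigenvalues of $\rho$ in decreasing order; $\mathrm{Dens}(\mathbb C^n)$ the density matrices; $\langle X,Y\rangle=\mathrm{Tr}(X^*Y)$. A classical scoring rule $\hat s$ has expected score $\hat s(q;p)=\sum_yp_y\hat s(q,y)$ ($0\cdot\pm\infty=0$); it is proper if $\hat s(q;p)\le\hat s(p;p)$ for all $p,q\in\Delta_{\mathcal Y}$, strictly proper if strict for $q\neq p$, regular if $\hat s(q;p)\in\mathbb R\cup\{-\infty\}$ and $\hat s(p;p)\in\mathbb R$ for all $p,q$; permutation-invariant if $\hat s(p,y)=\hat s(\pi p,\pi_y)$ for every permutation $\pi$, $(\pi p)_y=p_{\pi_y}$. The spectral score $S[\hat s]=(s,\mu^{\mathrm{spec}})$: $\mu^{\mathrm{spec}}(\rho)=\{x_yx_y^*\}_{y\in\mathcal Y}$ for an arbitrary orthonormal eigenbasis with $\rho=\sum_y\lambda(\rho)_yx_yx_y^*$, and $s(\rho,y)=\hat s(\lambda(\rho),y)$; expected score $S(\rho';\rho)=\sum_y\langle\mu^{\mathrm{spec}}(\rho')_y,\rho\rangle s(\rho',y)$. $S$ is truthful if $S(\rho;\rho)\ge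 S(\rho';\rho)$ for all $\rho,\rho'$, strictly truthful if strict when $\rho'\neq\rho$. *)

(* Defs.v *)
From HB Require Import structures.
From mathcomp Require Import all_boot all_order all_fingroup all_algebra.
From mathcomp Require Import reals constructive_ereal.
From mathcomp.real_closed Require Import complex.

Set Implicit Arguments.
Unset Strict Implicit.
Unset Printing Implicit Defensive.

Import Order.TTheory GRing.Theory Num.Theory.
Local Open Scope ring_scope.
Local Open Scope sesquilinear_scope.

Section Defs.
Variables (R : realType) (n : nat).

Definition prob_vec (p : 'rV[R]_n) : Prop :=
  (forall y, 0 <= p ord0 y) /\ \sum_(y < n) p ord0 y = 1.

(** A classical scoring rule  s : Delta_Y x Y -> R U {+-oo}
    (only its values on Delta_Y matter). *)
Definition scoring_rule := 'rV[R]_n -> 'I_n -> \bar R.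

(** Expected score  s(q;p) = sum_y p_y s(q,y), with 0 * (+-oo) = 0
    (this is the convention of mathcomp's extended-real product). *)
Definition exp_score (s : scoring_rule) (q p : 'rV[R]_n) : \bar R :=
  (\sum_(y < n) (p ord0 y)%:E * s q y)%E.

Definition proper_score (s : scoring_rule) : Prop :=
  forall p q, prob_vec p -> prob_vec q -> (exp_score s q p <= exp_score s p p)%E.

Definition strictly_proper_score (s : scoring_rule) : Prop :=
  forall p q, prob_vec p -> prob_vec q -> q != p ->
    (exp_score s q p < exp_score s p p)%E.

Definition regular (s : scoring_rule) : Prop :=
  forall p q, prob_vec p -> prob_vec q ->
    exp_score s q p != +oo%E /\ exp_score s p p \is a fin_num.

Definition perm_vec (pi : 'S_n) (p : 'rV[R]_n) : 'rV[R]_n :=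
  \row_y p ord0 (pi y).

Definition perm_invariant (s : scoring_rule) : Prop :=
  forall (pi : 'S_n) p y, prob_vec p -> s p y = s (perm_vec pi p) ((pi^-1)%g y).

Definition density (rho : 'M[R[i]]_n) : Prop :=
  rho ^t* = rho /\
  (forall v : 'rV[R[i]]_n, 0 <= (v *m rho *m v ^t*) ord0 ord0) /\
  \tr rho = 1.

(** An eigenbasis choice assigns to each matrix rho a matrix U rho whose rows
    x_y^* (y in Y) form the chosen orthonormal eigenbasis. *)
Definition eigbasis_choice := 'M[R[i]]_n -> 'M[R[i]]_n.

(** the values (U rho) rho (U rho)^* _{yy}; for a valid choice these are the
    eigenvalues lambda(rho)_y. *)
Definition lam (U : eigbasis_choice) (rho : 'M[R[i]]_n) : 'rV[R]_n :=
  \row_y complex.Re ((U rho *m rho *m (U rho) ^t*) y y).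

Definition valid_eigbasis (U : eigbasis_choice) : Prop :=
  forall rho, density rho ->
    [/\ U rho \is unitarymx,
        rho = (U rho) ^t* *m diag_mx (map_mx (real_complex R) (lam U rho)) *m U rho
      & forall i j : 'I_n, (i <= j)%N -> lam U rho ord0 j <= lam U rho ord0 i].

(** mu^spec(rho)_y = x_y x_y^*  (x_y is the column vector (row y (U rho))^* ). *)
Definition mu_spec (U : eigbasis_choice) (rho : 'M[R[i]]_n) (y : 'I_n)
  : 'M[R[i]]_n :=
  (row y (U rho)) ^t* *m row y (U rho).

Definition hs_inner (X Y : 'M[R[i]]_n) : R[i] := \tr (X ^t* *m Y).

(** Expected spectral score S(rho';rho) = sum_y <mu_y(rho'), rho> s(lambda(rho'), y);
    the inner products are real for Hermitian arguments, we take their real part. *)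
Definition spec_score (s : scoring_rule) (U : eigbasis_choice)
  (rho' rho : 'M[R[i]]_n) : \bar R :=
  (\sum_(y < n) (complex.Re (hs_inner (mu_spec U rho' y) rho))%:E
                  * s (lam U rho') y)%E.

Definition truthful (s : scoring_rule) (U : eigbasis_choice) : Prop :=
  forall rho rho', density rho -> density rho' ->
    (spec_score s U rho' rho <= spec_score s U rho rho)%E.

Definition strictly_truthful (s : scoring_rule) (U : eigbasis_choice) : Prop :=
  forall rho rho', density rho -> density rho' -> rho' != rho ->
    (spec_score s U rho' rho < spec_score s U rho rho)%E.

End Defs.

Lemma mul0e_check (R : realType) (x : \bar R) : (0%:E * x = 0)%E.
Proof. exact: mul0e. Qed.

(* Main.v *)
Require Import Defs.
From HB Require Import structures.
From mathcomp Require Import all_boot all_order all_fingroup all_algebra.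
From mathcomp Require Import reals constructive_ereal.
From mathcomp.real_closed Require Import complex.
From mathcomp Require Import ring lra.
Local Open Scope sesquilinear_scope.
Import Order.TTheory GRing.Theory Num.Theory.
Local Open Scope ring_scope.

Lemma sort_perm d (T : orderType d) (N : nat) (f : 'I_N -> T) :
  exists s : 'S_N, forall i j : 'I_N, (i <= j)%N -> (f (s j) <= f (s i))%O.
Proof.
pose r := fun i j : 'I_N => (f j <= f i)%O.
have rtot : total r by move=> i j; rewrite /r le_total.
have rtr : transitive r by move=> i j k; rewrite /r => h1 h2; exact: le_trans h2 h1.
have rrefl : reflexive r by move=> i; rewrite /r.
pose s := sort r (enum 'I_N).
have ss : size s = N by rewrite size_sort size_enum_ord.
have us : uniq s by rewrite sort_uniq enum_uniq.
have so : sorted r s by apply: sort_sorted.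
pose g := fun k : 'I_N => nth k s k.
have gE : forall (k : 'I_N) (x0 : 'I_N), g k = nth x0 s k.
  by move=> k x0; rewrite /g (set_nth_default x0) // ss.
have ginj : injective g.
  move=> i j; rewrite (gE j i) /g => /eqP; rewrite nth_uniq ?ss // => /eqP.
  exact: val_inj.
exists (perm ginj) => i j hij; rewrite !permE (gE i i) (gE j i).
have := sorted_leq_nth rtr rrefl i so; apply; rewrite ?inE ?ss //.
Qed.
Lemma abel (R : realFieldType) (x l b : nat -> R) m :
  (forall k, (k.+1 < m)%N -> b k.+1 <= b k) ->
  (forall j, (j <= m)%N -> \sum_(k < j) x k <= \sum_(k < j) l k) ->
  \sum_(k < m) x k = \sum_(k < m) l k ->
  \sum_(k < m) x k * b k <= \sum_(k < m) l k * b k.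
Proof.
move=> bd pre tot.
have key : forall j, (0 < j)%N -> (j <= m)%N ->
   (\sum_(k < j) l k - \sum_(k < j) x k) * b j.-1 <= \sum_(k < j) (l k - x k) * b k.
  elim=> [//|j IH] _ hj.
  case: j IH hj => [|j] IH hj; first by rewrite !big_ord1.
  have := IH isT (ltnW hj) => {}IH.
  rewrite (big_ord_recr j.+1 l) (big_ord_recr j.+1 x) (big_ord_recr j.+1 (fun k => (l k - x k) * b k)) /=.
  apply: le_trans _ (lerD IH (lexx ((l j.+1 - x j.+1) * b j.+1))).
  have D0 : 0 <= \sum_(k < j.+1) l k - \sum_(k < j.+1) x k.
    by rewrite subr_ge0 pre // ltnW.
  have bj : b j.+1 <= b j by apply: bd.
  rewrite -subr_ge0.
  have -> : (\sum_(i < j.+1) l i - \sum_(i < j.+1) x i) * b j +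
    (l j.+1 - x j.+1) * b j.+1 -
    (\sum_(i < j.+1) l i + l j.+1 - (\sum_(i < j.+1) x i + x j.+1)) * b j.+1
    = (\sum_(i < j.+1) l i - \sum_(i < j.+1) x i) * (b j - b j.+1) by ring.
  by apply: mulr_ge0 => //; rewrite subr_ge0.
case: m bd pre tot key => [|m] bd pre tot key; first by rewrite !big_ord0.
have := key m.+1 isT (leqnn _); rewrite tot subrr mul0r => h.
rewrite -subr_ge0 -sumrB; apply: le_trans h _; rewrite le_eqVlt; apply/orP; left.
by apply/eqP; apply: eq_bigr => k _; rewrite mulrBl.
Qed.
Lemma cut_lemma (R : realType) (b : nat -> \bar R) N :
  (forall k, (k.+1 < N)%N -> (b k.+1 <= b k)%E) ->
  exists m, (m <= N)%N /\ forall k, (k < N)%N -> (b k != -oo%E) = (k < m)%N.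
Proof.
elim: N => [|N IH] bd; first by exists 0%N.
have [m [mN hm]] : exists m, (m <= N)%N /\ forall k, (k < N)%N -> (b k != -oo%E) = (k < m)%N.
  by apply: IH => k hk; apply: bd; rewrite ltnS ltnW.
case: (boolP (b N != -oo%E)) => hbN.
  exists N.+1; split => // k hk.
  rewrite hk; case: (ltnP k N) => hkN.
    case: N IH bd m mN hm hbN hk hkN => [//|N] IH bd m mN hm hbN hk hkN.
    have : b N != -oo%E.
      apply: contra hbN => /eqP h; rewrite -leeNy_eq -h; exact: bd.
    rewrite hm // => hNm.
    by rewrite (hm _ hkN) (leq_trans hkN hNm).
  by have -> : k = N by apply/eqP; rewrite eqn_leq hkN -ltnS hk.
exists m; split; first exact: leq_trans mN _.
move=> k hk; case: (ltnP k N) => hkN; first exact: hm.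
have -> : k = N by apply/eqP; rewrite eqn_leq hkN -ltnS hk.
by rewrite (negbTE hbN) ltnNge mN.
Qed.

Lemma trunc_big (T : Type) (idx : T) (op : Monoid.law idx) (F : nat -> T) m N :
  (m <= N)%N -> (forall k, (m <= k)%N -> (k < N)%N -> F k = idx) ->
  \big[op/idx]_(k < N) F k = \big[op/idx]_(k < m) F k.
Proof.
move=> mN F0; rewrite (big_ord_widen N F mN) [RHS]big_mkcond; apply: eq_bigr => i _.
by case: ifP => // h; rewrite F0 // leqNgt h.
Qed.

Lemma rearr (R : realType) N (r lam : 'I_N -> R) (a : 'I_N -> \bar R) :
  (forall y, 0 <= r y) -> (forall y, 0 <= lam y) ->
  \sum_y r y = 1 -> \sum_y lam y = 1 ->
  (forall (s : 'S_N) j, (j <= N)%N ->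
     \sum_(i : 'I_N | (i < j)%N) r (s i) <= \sum_(i : 'I_N | (i < j)%N) lam i) ->
  (forall y, a y != +oo%E) ->
  (\sum_y (r y)%:E * a y)%E \is a fin_num ->
  exists pi : 'S_N, (\sum_y (r y)%:E * a y <= \sum_y (lam (pi y))%:E * a y)%E.
Proof.
move=> r0 l0 r1 l1 KF ay fin.
have [s hs] := @sort_perm _ _ N a.
exists s^-1%g.
rewrite (reindex_inj (@perm_inj _ s)) [X in (_ <= X)%E](reindex_inj (@perm_inj _ s)) /=.
have -> : (\sum_j (lam ((s^-1)%g (s j)))%:E * a (s j) = \sum_j (lam j)%:E * a (s j))%E.
  by apply: eq_bigr => j _; rewrite permK.
pose x k := oapp (fun i => r (s i)) 0 (insub k).
pose l k := oapp lam 0 (insub k).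
pose b k := oapp (fun i => a (s i)) 0%E (insub k).
have xE : forall i : 'I_N, x i = r (s i) by move=> i; rewrite /x valK.
have lE : forall i : 'I_N, l i = lam i by move=> i; rewrite /l valK.
have bE : forall i : 'I_N, b i = a (s i) by move=> i; rewrite /b valK.
have -> : (\sum_j (r (s j))%:E * a (s j) = \sum_(j < N) (x j)%:E * b j)%E.
  by apply: eq_bigr => j _; rewrite xE bE.
have -> : (\sum_j (lam j)%:E * a (s j) = \sum_(j < N) (l j)%:E * b j)%E.
  by apply: eq_bigr => j _; rewrite lE bE.
have [m [mN hm]] : exists m, (m <= N)%N /\ forall k, (k < N)%N -> (b k != -oo%E) = (k < m)%N.
  apply: cut_lemma => k hk.
  have hk' : (k < N)%N by exact: ltnW.
  rewrite -[k]/(val (Ordinal hk')) -[k.+1]/(val (Ordinal hk)) !bE; apply: hs => /=.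
  exact: leqnSn.
have x0 : forall k, (0 <= x k) by move=> k; rewrite /x; case: insub => //=.
have lpos : forall k, (0 <= l k) by move=> k; rewrite /l; case: insub => //=.
have xz : forall k, (m <= k)%N -> (k < N)%N -> x k = 0.
  move=> k mk kN; have := hm k kN; rewrite ltnNge mk /= => /negbFE/eqP bk.
  move/sum_fin_numP : fin => /(_ (s (Ordinal kN)) (mem_index_enum _) isT).
  rewrite -[k]/(val (Ordinal kN)) in bk *; rewrite xE; rewrite bE in bk; rewrite bk.
  have := r0 (s (Ordinal kN)); rewrite le_eqVlt => /orP [/eqP <- //|rp].
  by rewrite mulrNy gtr0_sg // mul1e.
have sx : \sum_(k < m) x k = 1.
  rewrite -(@trunc_big _ _ _ x m N mN) ?(xz) // -r1.
  rewrite [RHS](reindex_inj (@perm_inj _ s)) /=; apply: eq_bigr => i _; by rewrite xE.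
have pre : forall j, (j <= N)%N -> \sum_(k < j) x k <= \sum_(k < j) l k.
  move=> j jN; rewrite !(big_ord_widen N _ jN).
  have := KF s j jN; congr (_ <= _); apply: eq_bigr => i _; by rewrite ?xE ?lE.
have sl : \sum_(k < m) l k = 1.
  apply/eqP; rewrite eq_le; apply/andP; split.
    rewrite -l1; have -> : \sum_y lam y = \sum_(k < N) l k by apply: eq_bigr => i _; rewrite lE.
    rewrite (big_ord_widen N _ mN) [X in X <= _]big_mkcond /=; apply: ler_sum => i _.
    by case: ifP => _ //; apply: lpos.
  by rewrite -sx; apply: pre.
have lz : forall k, (m <= k)%N -> (k < N)%N -> l k = 0.
  have : \sum_(k < N | ~~ (k < m)%N) l k = 0.
    have := l1; have -> : \sum_y lam y = \sum_(k < N) l k by apply: eq_bigr => i _; rewrite lE.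
    rewrite (bigID (fun k : 'I_N => (k < m)%N)) /= -(big_ord_widen N _ mN) sl.
    by move=> h; rewrite -(addKr 1 (\sum_(i < N | ~~ (i < m)%N) l i)) h addNr.
  move=> hs0 k mk kN.
  have := @psumr_eq0P _ _ _ _ (fun (i : 'I_N) _ => lpos i) hs0 (Ordinal kN).
  by rewrite /= -leqNgt mk => ->.
have bfin : forall k, (k < m)%N -> b k \is a fin_num.
  move=> k km; have kN := leq_trans km mN.
  rewrite fin_numE hm // km /= -[k]/(val (Ordinal kN)) bE; exact: ay.
rewrite (@trunc_big _ _ _ (fun j => (x j)%:E * b j)%E m N mN); last first.
  by move=> k mk kN; rewrite xz // mul0e.
rewrite (@trunc_big _ _ _ (fun j => (l j)%:E * b j)%E m N mN); last first.
  by move=> k mk kN; rewrite lz // mul0e.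
have -> : (\sum_(k < m) (x k)%:E * b k = (\sum_(k < m) x k * fine (b k))%:E)%E.
  rewrite -sumEFin; apply: eq_bigr => i _; by rewrite EFinM fineK // bfin.
have -> : (\sum_(k < m) (l k)%:E * b k = (\sum_(k < m) l k * fine (b k))%:E)%E.
  rewrite -sumEFin; apply: eq_bigr => i _; by rewrite EFinM fineK // bfin.
rewrite lee_fin; apply: (@abel R x l (fun k => fine (b k)) m).
- move=> k hk; apply: fine_le; rewrite ?inE ?bfin //; first exact: ltnW.
  have hk' : (k < N)%N by apply: leq_trans mN; exact: ltnW.
  have hk2 : (k.+1 < N)%N by apply: leq_trans mN.
  rewrite -[k]/(val (Ordinal hk')) -[k.+1]/(val (Ordinal hk2)) !bE; apply: hs => /=.
  exact: leqnSn.
- move=> j jm; apply: pre; exact: leq_trans mN.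
- by rewrite sx sl.
Qed.
Lemma knapsack (R : realFieldType) N (mu c : 'I_N -> R) (k : nat) :
  (forall i j : 'I_N, (i <= j)%N -> mu j <= mu i) ->
  (forall z, 0 <= c z) -> (forall z, c z <= 1) -> \sum_z c z = k%:R ->
  \sum_z c z * mu z <= \sum_(z : 'I_N | (z < k)%N) mu z.
Proof.
move=> mud c0 c1 csum.
have kN : (k <= N)%N.
  rewrite -(ler_nat R) -csum -[N in N%:R]card_ord -sum1_card natr_sum.
  by apply: ler_sum => z _; apply: c1.
have [T [T1 T2]] : exists T, (forall z : 'I_N, (z < k)%N -> T <= mu z) /\
                     (forall z : 'I_N, (k <= z)%N -> mu z <= T).
  case: (ltnP k N) => hk.
    exists (mu (Ordinal hk)); split => z hz; apply: mud => //=; exact: ltnW.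
  case: N mu c mud c0 c1 csum kN hk => [|N] mu c mud c0 c1 csum kN hk.
    by exists 0; split => -[].
  exists (mu ord_max); split => z hz; first by apply: mud; rewrite -ltnS.
  by move: (ltn_ord z); rewrite ltnNge (leq_trans hk hz).
have cnt : \sum_(z < N) ((z < k)%N)%:R = k%:R :> R.
  transitivity (\sum_(z < N | (z < k)%N) (1:R)).
    by rewrite [RHS]big_mkcond; apply: eq_bigr => z _; case: ifP.
  by rewrite -(big_ord_widen N (fun _ => 1 : R) kN) sumr_const card_ord.
have h : \sum_(z < N) (c z - ((z < k)%N)%:R) * mu z <= 0.
  apply: le_trans (_ : _ <= \sum_(z < N) (c z - ((z < k)%N)%:R) * T) _.
    apply: ler_sum => z _; case: ltnP => hz.
      rewrite mulrC [X in _ <= X]mulrC; apply: ler_wnM2r.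
        by rewrite subr_le0 c1.
      exact: T1.
    by rewrite subr0 ler_wpM2l // T2.
  by rewrite -mulr_suml sumrB cnt csum subrr mul0r.
rewrite -subr_ge0 big_mkcond /= -sumrB.
rewrite -oppr_le0 -sumrN; apply: le_trans h; rewrite le_eqVlt; apply/orP; left.
apply/eqP; apply: eq_bigr => z _.
by rewrite opprB mulrBl; case: ifP => _; rewrite ?mul1r ?mul0r.
Qed.

Lemma KF (R : realType) N (D : 'I_N -> 'I_N -> R) (mu x : 'I_N -> R) :
  (forall y z, 0 <= D y z) -> (forall y, \sum_z D y z = 1) -> (forall z, \sum_y D y z = 1) ->
  (forall i j : 'I_N, (i <= j)%N -> mu j <= mu i) ->
  (forall y, x y = \sum_z D y z * mu z) ->
  forall (s : 'S_N) j, (j <= N)%N ->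
    \sum_(i : 'I_N | (i < j)%N) x (s i) <= \sum_(i : 'I_N | (i < j)%N) mu i.
Proof.
move=> D0 Dr Dc mud xE s j jN.
pose c z := \sum_(i : 'I_N | (i < j)%N) D (s i) z.
have -> : \sum_(i : 'I_N | (i < j)%N) x (s i) = \sum_z c z * mu z.
  under eq_bigr do rewrite xE.
  rewrite exchange_big /=; apply: eq_bigr => z _; by rewrite /c mulr_suml.
apply: knapsack => //.
- move=> z; apply: sumr_ge0 => i _; exact: D0.
- move=> z; rewrite -(Dc z) (reindex_inj (@perm_inj _ s)) /=.
  rewrite /c [X in X <= _]big_mkcond /=; apply: ler_sum => i _; case: ifP => _ //; exact: D0.
- rewrite /c exchange_big /=.
  under eq_bigr do rewrite Dr.
  transitivity (\sum_(z < N | (z < j)%N) (1:R)); first by [].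
  by rewrite -(big_ord_widen N (fun _ => 1 : R) jN) sumr_const card_ord.
Qed.
Section M.
Variables (R : realType) (n : nat).
Local Notation C := (R[i]).

Definition dg (V rho : 'M[C]_n) (y : 'I_n) : R := complex.Re ((V *m rho *m V^t*) y y).

Lemma conj_realC (x : R) : (x%:C%C : C)^* = x%:C%C.
Proof. by rewrite conj_Creal // complex_real. Qed.

Lemma quad_row m (V : 'M[C]_(m, n)) (rho : 'M[C]_n) y :
  (row y V *m rho *m (row y V)^t*) 0 0 = (V *m rho *m V^t*) y y.
Proof.
rewrite !mxE; apply: eq_bigr => j _; rewrite !mxE; congr (_ * _).
by apply: eq_bigr => k _; rewrite !mxE.
Qed.

Lemma trC_mul m p (A : 'M[C]_(m, n)) (B : 'M[C]_(n, p)) : (A *m B)^t* = B^t* *m A^t*.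
Proof. by rewrite trmx_mul map_mxM. Qed.

Lemma hs_row (U : eigbasis_choice R n) (rho' rho : 'M[C]_n) y :
  hs_inner (mu_spec U rho' y) rho = (U rho' *m rho *m (U rho')^t*) y y.
Proof.
rewrite /hs_inner /mu_spec trmx_mul map_mxM trmxCK -mulmxA mxtrace_mulC.
by rewrite /mxtrace big_ord1 quad_row.
Qed.

Lemma dgC (V rho : 'M[C]_n) y : density rho ->
  (dg V rho y)%:C%C = (V *m rho *m V^t*) y y /\ 0 <= dg V rho y.
Proof.
move=> [_ [pos _]]; have h := pos (row y V); rewrite quad_row in h.
by rewrite /dg RRe_real ?ger0_real //; split=> //; rewrite -ler0c RRe_real ?ger0_real.
Qed.

Lemma unitKt (V : 'M[C]_n) : V \is unitarymx -> V^t* *m V = 1%:M.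
Proof. by move=> h; rewrite -[V^t*]mul1mx mulmxKtV. Qed.

Lemma dg_sum (V rho : 'M[C]_n) : V \is unitarymx -> density rho -> \sum_y dg V rho y = 1.
Proof.
move=> VU hr; apply: (@complexI R); rewrite rmorph_sum /= rmorph1.
under eq_bigr do rewrite (dgC _ _ _ hr).1.
have := hr => [[_ [_ tr1]]].
rewrite -tr1 -/(mxtrace _) -mulmxA mxtrace_mulC -mulmxA unitKt // mulmx1 //.
Qed.

Lemma diag_repr m (V : 'M[C]_(m, n)) (W : 'M[C]_n) (mu : 'I_n -> R) y :
  (V *m (W^t* *m diag_mx (\row_z (mu z)%:C%C) *m W) *m V^t*) y y =
  \sum_z (mu z)%:C%C * ((V *m W^t*) y z * ((V *m W^t*) y z)^*).
Proof.
have -> : V *m (W^t* *m diag_mx (\row_z (mu z)%:C%C) *m W) *m V^t* =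
   (V *m W^t*) *m diag_mx (\row_z (mu z)%:C%C) *m (V *m W^t*)^t*.
  by rewrite trmx_mul map_mxM trmxCK !mulmxA.
rewrite mul_mx_diag !mxE; apply: eq_bigr => z _; rewrite !mxE.
by rewrite [LHS]mulrAC [LHS]mulrC.
Qed.

Lemma unit_mulC (V W : 'M[C]_n) : V \is unitarymx -> W \is unitarymx -> V *m W^t* \is unitarymx.
Proof.
move=> VU WU; have WU' : W^t* \is unitarymx by rewrite trmxC_unitary.
exact: (@mul_unitarymx _ n n n V (W^t*) VU WU').
Qed.

Definition Dm (X : 'M[C]_n) y z : R := complex.Re (X y z * (X y z)^*).

Lemma DmC (X : 'M[C]_n) y z : (Dm X y z)%:C%C = X y z * (X y z)^* /\ 0 <= Dm X y z.
Proof.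
have h := mul_conjC_ge0 (X y z).
by rewrite /Dm RRe_real ?ger0_real //; split=> //; rewrite -ler0c RRe_real ?ger0_real.
Qed.

Lemma dg_repr (V W : 'M[C]_n) (mu : 'I_n -> R) y :
  dg V (W^t* *m diag_mx (\row_z (mu z)%:C%C) *m W) y = \sum_z mu z * Dm (V *m W^t*) y z.
Proof.
rewrite /dg diag_repr.
under eq_bigr do rewrite -(DmC _ _ _).1 -rmorphM.
by rewrite -rmorph_sum.
Qed.

Lemma Dm_row (X : 'M[C]_n) y : X \is unitarymx -> \sum_z Dm X y z = 1.
Proof.
move=> XU; apply: (@complexI R); rewrite rmorph_sum /= rmorph1.
under eq_bigr do rewrite (DmC _ _ _).1.
have := congr1 (fun M : 'M[C]_n => M y y) (unitarymxP XU).
move=> h; transitivity ((X *m X ^t*) y y); last by rewrite h !mxE eqxx.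
rewrite !mxE; apply: eq_bigr => z _; by rewrite !mxE.
Qed.

Lemma Dm_col (X : 'M[C]_n) z : X \is unitarymx -> \sum_y Dm X y z = 1.
Proof.
move=> XU; apply: (@complexI R); rewrite rmorph_sum /= rmorph1.
under eq_bigr do rewrite (DmC _ _ _).1.
have := congr1 (fun M : 'M[C]_n => M z z) (unitKt _ XU).
move=> h; transitivity ((X ^t* *m X) z z); last by rewrite h !mxE eqxx.
rewrite !mxE; apply: eq_bigr => y _; by rewrite !mxE mulrC.
Qed.


Definition dmx (mu : 'I_n -> R) : 'M[C]_n := diag_mx (\row_z (mu z)%:C%C).

Lemma map_row_real (v : 'rV[R]_n) : map_mx (real_complex R) v = \row_z (v ord0 z)%:C%C.
Proof. by apply/matrixP => i j; rewrite !mxE (ord1 i). Qed.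

Lemma dmx_tC (mu : 'I_n -> R) : (dmx mu)^t* = dmx mu.
Proof.
apply/matrixP => i j; rewrite !mxE eq_sym.
case: eqP => [->|_]; rewrite ?mulr1n ?mulr0n ?conjC0 //.
by rewrite conj_Creal // complex_real.
Qed.

Lemma dens_conj (W : 'M[C]_n) (mu : 'I_n -> R) :
  W \is unitarymx -> (forall z, 0 <= mu z) -> \sum_z mu z = 1 ->
  density (W^t* *m dmx mu *m W).
Proof.
move=> WU mu0 mu1; split; [|split].
- by rewrite !trmx_mul !map_mxM trmxCK -/(dmx mu) -[X in _ *m X *m _]dmx_tC mulmxA.
- move=> v; rewrite /dmx diag_repr; apply: sumr_ge0 => z _; apply: mulr_ge0.
    by rewrite ler0c.
  exact: mul_conjC_ge0.
- rewrite mxtrace_mulC mulmxA (unitarymxP WU) mul1mx /dmx mxtrace_diag.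
  under eq_bigr do rewrite mxE.
  by rewrite -rmorph_sum mu1.
Qed.

Lemma conj_dmx (W : 'M[C]_n) (mu : 'I_n -> R) :
  W \is unitarymx -> W *m (W^t* *m dmx mu *m W) *m W^t* = dmx mu.
Proof. by move=> WU; rewrite !mulmxA (unitarymxP WU) mul1mx mulmxtVK. Qed.

Lemma prefix_eq N (f g : 'I_N -> R) :
  (forall j, (j <= N)%N -> \sum_(i : 'I_N | (i < j)%N) f i = \sum_(i : 'I_N | (i < j)%N) g i) ->
  forall y, f y = g y.
Proof.
move=> H y; have h1 := H y.+1 (ltn_ord y); have h2 := H y (ltnW (ltn_ord y)).
rewrite (bigD1 y) //= [X in _ = X](bigD1 y) //= in h1.
have E : forall F : 'I_N -> R, \sum_(i < N | (i < y.+1)%N && (i != y)) F i =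
                               \sum_(i < N | (i < y)%N) F i.
  by move=> F; apply: eq_bigl => i; rewrite ltnS andbC -val_eqE /= -ltn_neqAle.
by move: h1; rewrite !E h2 => /addIr.
Qed.

Lemma ident (U : eigbasis_choice R n) (W : 'M[C]_n) (mu : 'I_n -> R) (t : 'S_n) :
  valid_eigbasis U -> W \is unitarymx -> (forall z, 0 <= mu z) -> \sum_z mu z = 1 ->
  (forall i j : 'I_n, (i <= j)%N -> mu (t j) <= mu (t i)) ->
  forall y, lam U (W^t* *m dmx mu *m W) ord0 y = mu (t y).
Proof.
move=> valid WU mu0 mu1 tsort.
set rho := W^t* *m dmx mu *m W.
have drho : density rho by apply: dens_conj.
have [VU rep lsort] := valid rho drho.
set V := U rho in VU rep lsort *.
pose l y := lam U rho ord0 y.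
have lE : forall y, l y = dg V rho y by move=> y; rewrite /l /lam mxE.
apply: (@prefix_eq n l (fun y => mu (t y))) => j jN; apply/eqP; rewrite eq_le; apply/andP; split.
- have XU : V *m W^t* \is unitarymx by apply: unit_mulC.
  have := @KF R n (fun y k => Dm (V *m W^t*) y (t k)) (fun k => mu (t k)) l.
  move=> /(_ _ _ _ tsort _ 1%g j jN).
  under eq_bigr do rewrite perm1.
  apply=> //.
  + by move=> y z; exact: (DmC _ _ _).2.
  + move=> y; rewrite -(Dm_row _ y XU); apply: esym; apply: (reindex_inj (@perm_inj _ t)).
  + by move=> z; rewrite Dm_col.
  + move=> y; rewrite lE /rho dg_repr (reindex_inj (@perm_inj _ t)) /=.
    by apply: eq_bigr => k _; rewrite mulrC.
- have XU : W *m V^t* \is unitarymx by apply: unit_mulC.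
  have := @KF R n (Dm (W *m V^t*)) l mu.
  move=> /(_ _ _ _ lsort _ t j jN); apply=> //.
  + by move=> y z; exact: (DmC _ _ _).2.
  + by move=> y; rewrite Dm_row.
  + by move=> z; rewrite Dm_col.
  + move=> z.
    have -> : mu z = dg W rho z.
      by rewrite /dg conj_dmx // /dmx !mxE eqxx mulr1n.
    rewrite {1}rep map_row_real dg_repr; apply: eq_bigr => y _; by rewrite mulrC.
Qed.


Lemma frob (A : 'M[C]_n) : \tr (A *m A^t*) = \sum_y \sum_z A y z * (A y z)^*.
Proof. apply: eq_bigr => y _; rewrite !mxE; apply: eq_bigr => z _; by rewrite !mxE. Qed.

Lemma tr_conj (V rho : 'M[C]_n) : V \is unitarymx ->
  \tr ((V *m rho *m V^t*) *m (V *m rho *m V^t*)^t*) = \tr (rho *m rho^t*).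
Proof.
move=> VU; rewrite !trmx_mul !map_mxM trmxCK !mulmxA mulmxKtV //.
by rewrite -!mulmxA mxtrace_mulC !mulmxA mulmxKtV.
Qed.

Lemma frob_dmx (mu : 'I_n -> R) : \sum_y \sum_z (dmx mu) y z * ((dmx mu) y z)^* =
  \sum_y (mu y)%:C%C * ((mu y)%:C%C)^*.
Proof.
apply: eq_bigr => y _; rewrite (bigD1 y) //= big1 ?addr0.
  by rewrite !mxE eqxx mulr1n.
by move=> z /negbTE zy; rewrite !mxE eq_sym zy mulr0n mul0r.
Qed.

Lemma frob_eq (U : eigbasis_choice R n) (rho rho' : 'M[C]_n) :
  valid_eigbasis U -> density rho -> density rho' ->
  (forall y, lam U rho' ord0 y = dg (U rho') rho y) ->
  (exists pi : 'S_n, forall y, dg (U rho') rho y = lam U rho ord0 (pi y)) -> rho' = rho.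
Proof.
move=> valid dr dr' E1 [pi E2].
have [VU rep' _] := valid rho' dr'.
have [U0U rep _] := valid rho dr.
set V := U rho' in VU rep' E1 E2 *.
set M := V *m rho *m V^t*.
pose lf y := lam U rho ord0 y.
have hM : \sum_y \sum_z M y z * (M y z)^* = \sum_y (lf y)%:C%C * ((lf y)%:C%C)^*.
  have D0 : U rho *m rho *m (U rho)^t* = dmx lf.
    rewrite /dmx /lf -map_row_real.
    move: (lam U rho) rep => L rep.
    move: (U rho) U0U rep => U0 U0U rep.
    by rewrite rep map_row_real -/(dmx _) conj_dmx.
  by rewrite -frob tr_conj // -(tr_conj _ _ U0U) D0 frob frob_dmx.
have Mdiag : forall y, M y y = (lf (pi y))%:C%C by move=> y; rewrite /lf -E2 (dgC _ _ _ dr).1.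
have off : \sum_y \sum_(z | z != y) M y z * (M y z)^* = 0.
  have spl : \sum_y \sum_z M y z * (M y z)^* =
     \sum_y M y y * (M y y)^* + \sum_y \sum_(z | z != y) M y z * (M y z)^*.
    by rewrite -big_split; apply: eq_bigr => y _; rewrite (bigD1 y).
  move: hM; rewrite spl.
  have -> : \sum_y M y y * (M y y)^* = \sum_y (lf y)%:C%C * ((lf y)%:C%C)^*.
    under eq_bigr do rewrite Mdiag.
    by rewrite [RHS](reindex_inj (@perm_inj _ pi)).
  move=> h; rewrite -(addKr (\sum_y (lf y)%:C%C * ((lf y)%:C%C)^*)
     (\sum_y \sum_(z | z != y) M y z * (M y z)^*)).
  by rewrite h addNr.
have Mz : forall y z, z != y -> M y z = 0.
  move=> y z zy.
  have h1 := @psumr_eq0P _ _ _ _ (fun y _ => sumr_ge0 _ (fun z _ => mul_conjC_ge0 (M y z))) off y isT.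
  have := @psumr_eq0P _ _ _ _ (fun z _ => mul_conjC_ge0 (M y z)) h1 z zy.
  by move/eqP; rewrite mul_conjC_eq0 => /eqP.
have MD : M = dmx (fun y => lam U rho' ord0 y).
  have dE : forall y z, dmx (fun y => lam U rho' ord0 y) y z = (lam U rho' ord0 y)%:C%C *+ (y == z).
    by move=> y z; rewrite !mxE.
  apply/matrixP => y z; rewrite dE.
  case: (eqVneq y z) => [<-|yz]; last by rewrite mulr0n Mz // eq_sym.
  by rewrite mulr1n E1 (dgC _ _ _ dr).1.
rewrite {1}rep' map_row_real -/(dmx _) -MD /M.
by rewrite !mulmxA unitKt // mul1mx mulmxKtV.
Qed.

Lemma spec_eq (s : scoring_rule R n) (U : eigbasis_choice R n) (rho' rho : 'M[C]_n) :
  spec_score s U rho' rho = exp_score s (lam U rho') (\row_y dg (U rho') rho y).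
Proof. by apply: eq_bigr => y _; rewrite hs_row mxE. Qed.

Lemma lam_dg (U : eigbasis_choice R n) rho : lam U rho = \row_y dg (U rho) rho y.
Proof. by apply/matrixP => i j; rewrite !mxE. Qed.

Lemma spec_self (s : scoring_rule R n) (U : eigbasis_choice R n) (rho : 'M[C]_n) :
  spec_score s U rho rho = exp_score s (lam U rho) (lam U rho).
Proof. by rewrite spec_eq -lam_dg. Qed.


Lemma dg_prob (V rho : 'M[C]_n) : V \is unitarymx -> density rho -> prob_vec (\row_y dg V rho y).
Proof.
move=> VU dr; split.
  by move=> y; rewrite mxE; exact: (dgC _ _ _ dr).2.
under eq_bigr do rewrite mxE; exact: dg_sum.
Qed.

Lemma perm_prob (pi : 'S_n) (p : 'rV[R]_n) : prob_vec p -> prob_vec (perm_vec pi p).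
Proof.
move=> [p0 p1]; split; first by move=> y; rewrite mxE.
rewrite -p1 [RHS](reindex_inj (@perm_inj _ pi)); apply: eq_bigr => y _; by rewrite mxE.
Qed.

Lemma exp_perm (s : scoring_rule R n) (pi : 'S_n) (p q : 'rV[R]_n) :
  perm_invariant s -> prob_vec q ->
  exp_score s (perm_vec pi q) (perm_vec pi p) = exp_score s q p.
Proof.
move=> inv hq; rewrite /exp_score [RHS](reindex_inj (@perm_inj _ pi)).
apply: eq_bigr => y _; by rewrite mxE (inv pi q (pi y) hq) permK.
Qed.

Lemma ey_prob (y : 'I_n) : prob_vec (\row_z ((z == y)%:R : R)).
Proof.
split; first by move=> z; rewrite mxE ler0n.
rewrite (bigD1 y) //= big1 ?addr0; first by rewrite mxE eqxx.
by move=> z /negbTE zy; rewrite mxE zy.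
Qed.

Lemma noinf (s : scoring_rule R n) (q : 'rV[R]_n) y : regular s -> prob_vec q -> s q y != +oo%E.
Proof.
move=> reg hq; have := (reg _ q (ey_prob y) hq).1.
rewrite /exp_score (bigD1 y) //= big1 ?adde0.
  by rewrite mxE eqxx mul1e.
by move=> z /negbTE zy; rewrite mxE zy mul0e.
Qed.

Lemma setup (s : scoring_rule R n) (U : eigbasis_choice R n) (rho rho' : 'M[C]_n) :
  perm_invariant s -> regular s -> valid_eigbasis U -> density rho -> density rho' ->
  exists pi : 'S_n,
   prob_vec (\row_y dg (U rho') rho y) /\ prob_vec (lam U rho) /\ prob_vec (lam U rho') /\
   prob_vec (perm_vec pi (lam U rho)) /\
   (exp_score s (\row_y dg (U rho') rho y) (\row_y dg (U rho') rho y) <=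
      exp_score s (\row_y dg (U rho') rho y) (perm_vec pi (lam U rho)))%E /\
   exp_score s (perm_vec pi (lam U rho)) (perm_vec pi (lam U rho)) = exp_score s (lam U rho) (lam U rho) /\
   (\row_y dg (U rho') rho y = perm_vec pi (lam U rho) ->
      lam U rho' = \row_y dg (U rho') rho y -> rho' = rho).
Proof.
move=> inv reg valid dr dr'.
have [VU _ _] := valid rho' dr'.
have [U0U rep Lsort] := valid rho dr.
set r := \row_y dg (U rho') rho y.
have rP : prob_vec r by apply: dg_prob.
have LP : prob_vec (lam U rho) by rewrite lam_dg; apply: dg_prob.
have L'P : prob_vec (lam U rho') by rewrite lam_dg; apply: dg_prob.
have XU : U rho' *m (U rho)^t* \is unitarymx by apply: unit_mulC.
have rE : forall y, r ord0 y = \sum_z Dm (U rho' *m (U rho)^t*) y z * lam U rho ord0 z.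
  move=> y; rewrite /r mxE.
  have -> : dg (U rho') rho y =
            dg (U rho') ((U rho)^t* *m dmx (fun z => lam U rho ord0 z) *m U rho) y.
    by rewrite /dmx -map_row_real -rep.
  by rewrite dg_repr; apply: eq_bigr => z _; rewrite mulrC.
have KFh := @KF R n (Dm (U rho' *m (U rho)^t*)) (fun z => lam U rho ord0 z) (fun y => r ord0 y)
   (fun y z => (DmC _ _ _).2) (fun y => Dm_row _ y XU) (fun z => Dm_col _ z XU) Lsort rE.
have [pi hpi] := @rearr R n (fun y => r ord0 y) (fun z => lam U rho ord0 z) (s r)
   rP.1 LP.1 rP.2 LP.2 KFh (fun y => noinf s r y reg rP) (reg r r rP rP).2.
exists pi; split; first exact: rP; split; first exact: LP; split; first exact: L'P.
split; first exact: perm_prob.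
split.
  apply: le_trans hpi _; rewrite le_eqVlt; apply/orP; left; apply/eqP.
  rewrite /exp_score; under [RHS]eq_bigr do rewrite mxE; by [].
split; first exact: exp_perm.
move=> E2 E1; apply: (@frob_eq U rho rho' valid dr dr').
  by move=> y; rewrite E1 /r mxE.
by exists pi => y; have := congr1 (fun M : 'rV[R]_n => M ord0 y) E2; rewrite /r !mxE.
Qed.


Lemma unit1 : (1%:M : 'M[C]_n) \is unitarymx.
Proof. by apply/unitarymxP; rewrite trmx1 map_mx1 mulmx1. Qed.

Lemma construct (s : scoring_rule R n) (U : eigbasis_choice R n) (p q : 'rV[R]_n) :
  perm_invariant s -> valid_eigbasis U -> prob_vec p -> prob_vec q ->
  exists rho rho', [/\ density rho, density rho',
    spec_score s U rho' rho = exp_score s q p,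
    spec_score s U rho rho = exp_score s p p &
    (q != p -> rho' != rho)].
Proof.
move=> inv valid hp hq.
have [sg hsg] := @sort_perm _ _ n (fun y => q ord0 y).
have q'P := perm_prob sg q hq.
have p'P := perm_prob sg p hp.
pose rho' := (1%:M)^t* *m dmx (fun y => perm_vec sg q ord0 y) *m 1%:M.
have dr' : density rho' by apply: dens_conj; [exact: unit1 | exact: q'P.1 | exact: q'P.2].
have [VU _ _] := valid rho' dr'.
pose rho := (U rho')^t* *m dmx (fun y => perm_vec sg p ord0 y) *m U rho'.
have dr : density rho by apply: dens_conj; [exact: VU | exact: p'P.1 | exact: p'P.2].
have L'E : forall y, lam U rho' ord0 y = perm_vec sg q ord0 y.
  move=> y; rewrite (@ident U 1%:M (fun y => perm_vec sg q ord0 y) 1%g valid unit1 q'P.1 q'P.2) ?perm1 //.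
  by move=> i j hij; rewrite !perm1 !mxE; apply: hsg.
have [tau htau] := @sort_perm _ _ n (fun y => perm_vec sg p ord0 y).
have LE : forall y, lam U rho ord0 y = perm_vec sg p ord0 (tau y).
  exact: (@ident U (U rho') (fun y => perm_vec sg p ord0 y) tau valid VU p'P.1 p'P.2 htau).
have dgE : forall y, dg (U rho') rho y = perm_vec sg p ord0 y.
  by move=> y; rewrite /dg /rho conj_dmx // /dmx !mxE eqxx mulr1n.
exists rho, rho'; split => //.
- rewrite spec_eq.
  have -> : lam U rho' = perm_vec sg q by apply/matrixP => i j; rewrite (ord1 i) L'E.
  have -> : \row_y dg (U rho') rho y = perm_vec sg p.
    by apply/matrixP => i j; rewrite (ord1 i) mxE dgE.
  exact: exp_perm.
- rewrite spec_self.
  have -> : lam U rho = perm_vec tau (perm_vec sg p).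
    by apply/matrixP => i j; rewrite (ord1 i) LE [RHS]mxE.
  by rewrite exp_perm // exp_perm.
- move=> neq; apply/eqP => E; move/eqP: neq; apply.
  apply/matrixP => i y; rewrite (ord1 i).
  have := L'E ((sg^-1)%g y); rewrite lam_dg mxE.
  by rewrite {2}E dgE !mxE permKV => ->.
Qed.

Lemma main (s : scoring_rule R n) :
  perm_invariant s -> regular s ->
  forall U : eigbasis_choice R n, valid_eigbasis U ->
    (truthful s U <-> proper_score s) /\ (strictly_truthful s U <-> strictly_proper_score s).
Proof.
move=> inv reg U valid.
have sp_p : strictly_proper_score s -> proper_score s.
  move=> hsp p q hp hq; case: (eqVneq q p) => [->|nqp]; first by [].
  exact/ltW/hsp.
split; split.
- move=> ht p q hp hq.
  have [rho [rho' [dr dr' e1 e2 _]]] := construct s U p q inv valid hp hq.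
  by rewrite -e1 -e2; apply: ht.
- move=> hp rho rho' dr dr'; rewrite spec_eq spec_self.
  have [pi [rP [LP [L'P [pP [h1 [h2 _]]]]]]] := setup s U rho rho' inv reg valid dr dr'.
  apply: le_trans (hp _ _ rP L'P) _.
  apply: le_trans h1 _.
  rewrite -h2; exact: hp.
- move=> ht p q hp hq nqp.
  have [rho [rho' [dr dr' e1 e2 e3]]] := construct s U p q inv valid hp hq.
  by rewrite -e1 -e2; apply: ht => //; apply: e3.
- move=> hsp rho rho' dr dr' neq; rewrite spec_eq spec_self.
  have hp := sp_p hsp.
  have [pi [rP [LP [L'P [pP [h1 [h2 h3]]]]]]] := setup s U rho rho' inv reg valid dr dr'.
  case: (eqVneq (\row_y dg (U rho') rho y) (perm_vec pi (lam U rho))) => [erp|nrp].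
    case: (eqVneq (lam U rho') (\row_y dg (U rho') rho y)) => [eLr|nLr].
      by move: neq; rewrite (h3 erp eLr) eqxx.
    apply: lt_le_trans (hsp _ _ rP L'P nLr) _.
    apply: le_trans h1 _.
    rewrite -h2; exact: hp.
  apply: le_lt_trans (hp _ _ rP L'P) _.
  apply: le_lt_trans h1 _.
  rewrite -h2; exact: hsp.
Qed.

End M.

Theorem theorem4p4 (R : realType) (n : nat) (s : scoring_rule R n) :
  perm_invariant s -> regular s ->
  forall U : eigbasis_choice R n, valid_eigbasis U ->
    (truthful s U <-> proper_score s) /\ (strictly_truthful s U <-> strictly_proper_score s).
Proof. exact: main. Qed.
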